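(* Let $\mathbf{A}$ be a 4-dimensional cyclic Leibniz algebra over $\mathbb{C}$. Then $\mathbf{A}$ is isomorphic to a Leibniz algebra with basis $\{a,a^2,a^3,a^4\}$, where $aa^i=a^{i+1}$ for $1\le i\le 3$, $a^iv=0$ for $i\ge2$ and all $v$, and $aa^4$ is given by one and only one of the following: (1) $aa^4=0$; (2) $aa^4=a^4$; (3) $aa^4=a^3+\alpha_4a^4$ with $\alpha_4\in\mathbb{C}/\sim$, where $\alpha\sim\alpha'$ iff $\alpha'=\pm\alpha$; (4) $aa^4=a^2+\alpha_3a^3+\alpha_4a^4$ with $(\alpha_3,\alpha_4)\in\mathbb{C}^2/\sim$, where $(\alpha,\beta)\sim(\alpha',\beta')$ iff $(\alpha',\beta')\in\{(\alpha,\beta),(\omega^2\alpha,\omega\beta),(\omega\alpha,\omega^2\beta)\}$ with $\omega=e^{2\pi i/3}$. Here ''one and only one'' means that algebras from different cases are non-isomorphic, and within case (3) (resp. (4)) two parameter values give isomorphic algebras iff they are equivalent under the stated relation $\sim$.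
   Context: A (left) Leibniz algebra is a vector space with a bilinear product such that $x(yz)=(xy)z+y(xz)$ for all $x,y,z$. A cyclic Leibniz algebra is a Leibniz algebra generated by a single element. For an element $x$ set $x^1=x$ and $x^{j+1}=x\,x^j$. *)

(* Defs.v *)
(* The complex numbers are modelled as R[i] = complex R
   for an arbitrary R : realType (any realType is the real numbers). *)
From HB Require Import structures.
From mathcomp Require Import all_boot all_order all_algebra.
From mathcomp Require Import reals.
From mathcomp Require Import complex.
Set Implicit Arguments. Unset Strict Implicit. Unset Printing Implicit Defensive.
Import Order.TTheory GRing.Theory Num.Theory.
Local Open Scope ring_scope.

Section LeibnizDefs.
Variable K : fieldType.

Definition bilinear_prod (V : lmodType K) (mul : V -> V -> V) : Prop :=
  (forall (k : K) (u v w : V), mul (k *: u + v) w = k *: mul u w + mul v w) /\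
  (forall (k : K) (u v w : V), mul w (k *: u + v) = k *: mul w u + mul w v).

Definition left_leibniz (V : lmodType K) (mul : V -> V -> V) : Prop :=
  forall x y z : V, mul x (mul y z) = mul (mul x y) z + mul y (mul x z).

Definition leibniz_algebra (V : lmodType K) (mul : V -> V -> V) : Prop :=
  bilinear_prod mul /\ left_leibniz mul.

Definition generated_by (V : vectType K) (mul : V -> V -> V) (x : V) : Prop :=
  forall U : {vspace V}, x \in U ->
    (forall u v, u \in U -> v \in U -> mul u v \in U) -> U = fullv.

Definition cyclic_algebra (V : vectType K) (mul : V -> V -> V) : Prop :=
  exists x : V, generated_by mul x.

Definition alg_iso (V W : lmodType K) (mV : V -> V -> V) (mW : W -> W -> W)
  : Prop :=
  exists f : {linear V -> W},
    bijective f /\ forall u v : V, f (mV u v) = mW (f u) (f v).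

(* The model algebras on K^4 with basis e_0 = a, e_1 = a^2, e_2 = a^3,
   e_3 = a^4 (row vectors).  L is the left multiplication by a:
   L e_i = e_(i+1) for i < 3 and L e_3 = c. *)
Definition ebasis (i : 'I_4) : 'rV[K]_4 := delta_mx 0 i.

Definition model_L (c : 'rV[K]_4) : 'M[K]_4 :=
  \matrix_(i < 4) (if (i : nat) == 3%N then c else ebasis (inord i.+1)).

(* product: x y = x_0 * L(y); so a a^i = a^(i+1) (i <= 3), a a^4 = c,
   and a^i v = 0 for i >= 2 *)
Definition model_mul (c : 'rV[K]_4) (x y : 'rV[K]_4) : 'rV[K]_4 :=
  x 0 0 *: (y *m model_L c).

End LeibnizDefs.

Inductive cls (C : Type) : Type :=
| Cls1 : cls C
| Cls2 : cls C
| Cls3 : C -> cls C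
| Cls4 : C -> C -> cls C.

Definition cls_vec (K : fieldType) (k : cls K) : 'rV[K]_4 :=
  match k with
  | Cls1 => 0
  | Cls2 => ebasis K 3
  | Cls3 a4 => ebasis K 2 + a4 *: ebasis K 3
  | Cls4 a3 a4 => ebasis K 1 + a3 *: ebasis K 2 + a4 *: ebasis K 3
  end.

(* omega = exp(2 pi i / 3) = -1/2 + (sqrt 3 / 2) i *)
Definition omega (R : realType) : R[i] :=
  Complex (- (1 / 2)) (Num.sqrt 3 / 2).

Definition cls_equiv (R : realType) (k k' : cls R[i]) : Prop :=
  match k, k' with
  | Cls1, Cls1 => True
  | Cls2, Cls2 => True
  | Cls3 a, Cls3 a' => a' = a \/ a' = - a
  | Cls4 a b, Cls4 a' b' =>
      (a', b') = (a, b) \/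
      (a', b') = (omega R ^+ 2 * a, omega R * b) \/
      (a', b') = (omega R * a, omega R ^+ 2 * b)
  | _, _ => False
  end.

(* Main.v *)
Require Import Defs.
From HB Require Import structures.
From mathcomp Require Import all_boot all_order all_algebra.
From mathcomp Require Import reals complex.
From mathcomp Require Import ring.
Set Warnings "-notation-overridden,-ambiguous-paths".
Set Implicit Arguments. Unset Strict Implicit.
Import GRing.Theory Num.Theory.
Local Open Scope ring_scope.
Section Abs.
Variables (K : fieldType) (V : vectType K) (mul : V -> V -> V).
Hypothesis Hbil : bilinear_prod mul.
Hypothesis Hleib : left_leibniz mul.

Lemma aa0 {M : zmodType} {a : M} : a = a + a -> a = 0.
Proof. by rewrite -{1}[a]addr0 => /addrI ->. Qed.

Lemma mulLin u v w (k : K) : mul (k *: u + v) w = k *: mul u w + mul v w.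
Proof. by case: Hbil => H _; apply: H. Qed.
Lemma mulRin u v w (k : K) : mul w (k *: u + v) = k *: mul w u + mul w v.
Proof. by case: Hbil => _ H; apply: H. Qed.

Lemma mul0l w : mul 0 w = 0.
Proof.
have H := mulLin 0 0 w 1; rewrite !scale1r addr0 in H; exact: aa0 H.
Qed.
Lemma mul0r w : mul w 0 = 0.
Proof.
have H := mulRin 0 0 w 1; rewrite !scale1r addr0 in H; exact: aa0 H.
Qed.
Lemma mulZl k u w : mul (k *: u) w = k *: mul u w.
Proof. by have := mulLin u 0 w k; rewrite addr0 mul0l addr0. Qed.
Lemma mulZr k u w : mul w (k *: u) = k *: mul w u.
Proof. by have := mulRin u 0 w k; rewrite addr0 mul0r addr0. Qed.
Lemma mulDl u v w : mul (u + v) w = mul u w + mul v w.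
Proof. by have := mulLin u v w 1; rewrite !scale1r. Qed.
Lemma mulDr u v w : mul w (u + v) = mul w u + mul w v.
Proof. by have := mulRin u v w 1; rewrite !scale1r. Qed.

Definition ann y := forall z, mul y z = 0.

Lemma ann_sq y : ann (mul y y).
Proof.
move=> z; have := Hleib y y z; rewrite -{1}[mul y (mul y z)]add0r.
by move=> /addIr.
Qed.

Lemma ann_mul x w : ann w -> ann (mul x w).
Proof.
move=> Hw z; have := Hleib x w z; rewrite Hw mul0r Hw addr0.
by move=> ->.
Qed.

Lemma ann_comb k u v : ann u -> ann v -> ann (k *: u + v).
Proof. by move=> Hu Hv z; rewrite mulLin Hu Hv scaler0 addr0. Qed.

Lemma annD u v : ann u -> ann v -> ann (u + v).
Proof. by move=> Hu Hv z; rewrite mulDl Hu Hv addr0. Qed.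
Lemma annZ k u : ann u -> ann (k *: u).
Proof. by move=> Hu z; rewrite mulZl Hu scaler0. Qed.

Lemma lin_span (F : V -> V) (U : {vspace V}) (X : seq V) :
  (forall k u v, F (k *: u + v) = k *: F u + F v) ->
  (forall y, y \in X -> F y \in U) ->
  forall u, u \in <<X>>%VS -> F u \in U.
Proof.
move=> HF; elim: X => [|y X IH] HX u.
  rewrite span_nil memv0 => /eqP ->.
  have H := HF 1 0 0; rewrite !scale1r addr0 in H; rewrite (aa0 H); exact: mem0v.
rewrite span_cons => /memv_addP [a /vlineP [k ->] [b Hb ->]].
rewrite HF; apply: memvD; first by apply: memvZ; apply: HX; rewrite inE eqxx.
by apply: IH => // z Hz; apply: HX; rewrite inE Hz orbT.
Qed.

Lemma small_gen (x : V) (X : seq V) :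
  generated_by mul x -> \dim (fullv : {vspace V}) = 4%N ->
  x \in <<X>>%VS ->
  (forall y, y \in X -> y = x \/ ann y) ->
  (forall y, y \in X -> mul x y \in <<X>>%VS) ->
  (size X < 4)%N -> False.
Proof.
move=> Hg Hd Hx HX1 HX2 Hs.
have HU : <<X>>%VS = fullv.
  apply: Hg => // u v Hu Hv.
  apply: (@lin_span (fun w => mul w v)) Hu => [k a b|y Hy]; first by rewrite mulLin.
  case: (HX1 y Hy) => [->|Ha]; last by rewrite Ha mem0v.
  apply: (@lin_span (mul x)) Hv => [k a b|z Hz]; first by rewrite mulRin.
  exact: HX2.
have := dim_span X; rewrite HU Hd => H.
by have := leq_trans H Hs.
Qed.

Lemma struct4 x : generated_by mul x -> \dim (fullv : {vspace V}) = 4%N ->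
  let p2 := mul x x in let p3 := mul x p2 in let p4 := mul x p3 in
  basis_of fullv [:: x; p2; p3; p4] /\ ann p2 /\ ann p3 /\ ann p4 /\
  exists c1 c2 c3, mul x p4 = c1 *: p2 + c2 *: p3 + c3 *: p4.
Proof.
move=> Hg Hd p2 p3 p4.
have a2 : ann p2 by apply: ann_sq.
have a3 : ann p3 by apply: ann_mul.
have a4 : ann p4 by apply: ann_mul.
have nx : x != 0.
  apply/negP => /eqP x0.
  apply: (@small_gen x [::]) => //; first by rewrite x0 mem0v.
have n2 : p2 \notin <<[:: x]>>%VS.
  apply/negP => H.
  apply: (@small_gen x [:: x]) => //.
  - by rewrite memv_span1.
  - by move=> y; rewrite inE => /eqP ->; left.
  - by move=> y; rewrite inE => /eqP ->.
have n3 : p3 \notin <<[:: p2; x]>>%VS.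
  apply/negP => H.
  apply: (@small_gen x [:: p2; x]) => //.
  - by apply: memv_span; rewrite !inE eqxx orbT.
  - by move=> y; rewrite !inE => /orP [] /eqP ->; [right|left].
  - move=> y; rewrite !inE => /orP [] /eqP -> //.
    by apply: memv_span; rewrite !inE eqxx.
have n4 : p4 \notin <<[:: p3; p2; x]>>%VS.
  apply/negP => H.
  apply: (@small_gen x [:: p3; p2; x]) => //.
  - by apply: memv_span; rewrite !inE eqxx !orbT.
  - by move=> y; rewrite !inE => /orP [/eqP ->|/orP [] /eqP ->]; [right|right|left].
  - move=> y; rewrite !inE => /orP [/eqP ->|/orP [] /eqP ->] //.
      by apply: memv_span; rewrite !inE eqxx.
    by apply: memv_span; rewrite !inE eqxx orbT.
have fr : free [:: p4; p3; p2; x].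
  by rewrite !free_cons n2 n3 n4 span_nil memv0 nx nil_free.
have b1 : basis_of fullv [:: p4; p3; p2; x].
  by rewrite basisEfree fr subvf Hd.
have b : basis_of fullv [:: x; p2; p3; p4].
  have Hp : perm_eq (rev [:: p4; p3; p2; x]) [:: p4; p3; p2; x].
    by rewrite perm_rev perm_refl.
  by rewrite -(perm_basis _ Hp) in b1.
split => //; split => //; split => //; split => //.
pose X := [tuple x; p2; p3; p4].
have bX : basis_of fullv X by [].
have := coord_basis bX (memvf (mul x p4)).
rewrite !big_ord_recl big_ord0 /=.
set k0 := coord X _ _; set k1 := coord X _ _; set k2 := coord X _ _; set k3 := coord X _ _.
move=> E.
case: (eqVneq k0 0) => [k00|k0n].
  by exists k1, k2, k3; rewrite E k00 scale0r add0r addr0 addrA.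
exfalso.
have aR : ann (k1 *: p2 + k2 *: p3 + k3 *: p4).
  by apply: annD; [apply: annD|]; apply: annZ.
have a5 : ann (mul x p4) by apply: ann_mul.
have ak : ann (k0 *: x).
  have -> : k0 *: x = (-1) *: (k1 *: p2 + k2 *: p3 + k3 *: p4) + mul x p4.
    by rewrite E scaleN1r addr0 (addrA (k1 *: p2)) (addrC (k0 *: x)) addKr.
  exact: ann_comb.
have := ak x; rewrite mulZl => /eqP; rewrite scaler_eq0 (negPf k0n) /= => /eqP p20.
by move: n2; rewrite /p2 p20 mem0v.
Qed.
End Abs.
Definition crow (K : fieldType) (V : vectType K) (X : 4.-tuple V) (v : V)
  : 'rV[K]_4 := \row_i coord X i v.
Lemma crow_linear (K : fieldType) (V : vectType K) (X : 4.-tuple V) :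
  linear (crow X).
Proof. by move=> k v1 v2; apply/rowP=> i; rewrite !mxE linearP. Qed.
HB.instance Definition _ (K : fieldType) (V : vectType K) (X : 4.-tuple V) :=
  GRing.isSemilinear.Build K V 'rV[K]_4 _ (crow X)
    (GRing.semilinear_linear (@crow_linear K V X)).

Lemma model_row (K : fieldType) (c : 'rV[K]_4) (i : 'I_4) :
  row i (model_L c) = if (i : nat) == 3%N then c else ebasis K (inord i.+1).
Proof. by rewrite rowK. Qed.

Section Iso.
Variables (K : fieldType) (V : vectType K) (mul : V -> V -> V).
Hypothesis Hbil : bilinear_prod mul.

Lemma iso_basis (b0 b1 b2 b3 : V) :
  basis_of fullv [:: b0; b1; b2; b3] ->
  ann mul b1 -> ann mul b2 -> ann mul b3 ->
  mul b0 b0 = b1 -> mul b0 b1 = b2 -> mul b0 b2 = b3 ->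
  alg_iso mul (model_mul (crow [tuple b0; b1; b2; b3] (mul b0 b3))).
Proof.
move=> Hb a1 a2 a3 e1 e2 e3.
set X := [tuple b0; b1; b2; b3].
have bX : basis_of fullv X by [].
have frX : free X by apply: basis_free bX.
pose f := crow X.
have dec w : w = f w 0 0 *: b0 + f w 0 1 *: b1 + f w 0 2 *: b2 + f w 0 3 *: b3.
  rewrite [LHS](coord_basis bX (memvf w)) !big_ord_recl big_ord0 /= !mxE addr0 !addrA.
  by congr (_ *: _ + _ *: _ + _ *: _ + _ *: _); congr (coord _ _ _); apply: val_inj.
have fb (i : 'I_4) : f X`_i = ebasis K i.
  apply/rowP => j; by rewrite !mxE coord_free // eqxx /= eq_sym.
exists (crow X : {linear V -> 'rV[K]_4}); split.
  exists (fun r : 'rV[K]_4 => \sum_(i < 4) r 0 i *: X`_i).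
    by move=> w /=; rewrite [RHS](coord_basis bX (memvf w)); apply: eq_bigr => i _; rewrite mxE.
  by move=> r /=; by apply/rowP => j; rewrite mxE coord_sum_free.
move=> u v.
rewrite {1}(dec u) !(mulDl Hbil) !(mulZl Hbil) a1 a2 a3 !scaler0 !addr0.
rewrite {1}(dec v) !(mulDr Hbil) !(mulZr Hbil) e1 e2 e3.
rewrite /model_mul mulmx_sum_row !big_ord_recl big_ord0 addr0 !model_row /=.
rewrite !linearZ !linearD !linearZ /=.
have f1 : crow X b1 = ebasis K 1 by exact: fb 1.
have f2 : crow X b2 = ebasis K 2 by exact: fb 2.
have f3 : crow X b3 = ebasis K 3 by exact: fb 3.
have l0 : ord0 = 0 :> 'I_4 by apply: val_inj.
have l1 : lift ord0 ord0 = 1 :> 'I_4 by apply: val_inj.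
have l2 : lift ord0 (lift ord0 ord0) = 2 :> 'I_4 by apply: val_inj.
have l3 : lift ord0 (lift ord0 (lift ord0 ord0)) = 3 :> 'I_4 by apply: val_inj.
have i1 : inord 1 = 1 :> 'I_4 by apply: val_inj; rewrite /= inordK.
have i2 : inord (bump 0 0).+1 = 2 :> 'I_4 by apply: val_inj; rewrite /= inordK.
have i3 : inord (bump 0 (bump 0 0)).+1 = 3 :> 'I_4 by apply: val_inj; rewrite /= inordK.
rewrite f1 f2 f3 l0 l1 l2 l3 i1 i2 i3 /f !scalerDr !scalerA !addrA.
by congr (_ + _ + _ + _); congr (_ *: _); apply: mulrC.
Qed.
End Iso.
Section Scaled.
Variables (K : fieldType) (V : vectType K) (mul : V -> V -> V).
Hypothesis Hbil : bilinear_prod mul.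
Hypothesis Hleib : left_leibniz mul.

Lemma gen_scale x t : t != 0 -> generated_by mul x -> generated_by mul (t *: x).
Proof.
move=> tn Hg U Hx Hc; apply: Hg => //.
have -> : x = t^-1 *: (t *: x) by rewrite scalerA mulVf // scale1r.
exact: memvZ.
Qed.

Lemma scaled_iso x t (c1 c2 c3 : K) :
  generated_by mul x -> \dim (fullv : {vspace V}) = 4%N -> t != 0 ->
  mul x (mul x (mul x (mul x x))) = c1 *: mul x x + c2 *: mul x (mul x x) +
     c3 *: mul x (mul x (mul x x)) ->
  alg_iso mul (model_mul ((t ^+ 3 * c1) *: ebasis K 1 + (t ^+ 2 * c2) *: ebasis K 2
                          + (t * c3) *: ebasis K 3)).
Proof.
move=> Hg Hd tn Ec.
set a := t *: x.
have Hga := gen_scale tn Hg.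
have [Hb [a2 [a3 [a4 _]]]] := struct4 Hbil Hleib Hga Hd.
have E2 : mul a a = t ^+ 2 *: mul x x.
  by rewrite /a (mulZl Hbil) (mulZr Hbil) scalerA expr2.
have E3 : mul a (mul a a) = t ^+ 3 *: mul x (mul x x).
  by rewrite E2 /a (mulZl Hbil) (mulZr Hbil) scalerA -exprS.
have E4 : mul a (mul a (mul a a)) = t ^+ 4 *: mul x (mul x (mul x x)).
  by rewrite E3 /a (mulZl Hbil) (mulZr Hbil) scalerA -exprS.
have E5 : mul a (mul a (mul a (mul a a))) =
   (t ^+ 3 * c1) *: mul a a + (t ^+ 2 * c2) *: mul a (mul a a)
   + (t * c3) *: mul a (mul a (mul a a)).
  rewrite E4 E3 E2 /a (mulZl Hbil) (mulZr Hbil) Ec !scalerDr !scalerA.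
  by congr (_ *: _ + _ *: _ + _ *: _); rewrite !exprS expr0; ring.
have := iso_basis Hbil Hb a2 a3 a4 erefl erefl erefl.
set X := [tuple _; _; _; _].
have frX : free X by apply: basis_free Hb.
have fb (i : 'I_4) : crow X X`_i = ebasis K i.
  by apply/rowP => j; rewrite !mxE coord_free // eqxx /= eq_sym.
rewrite E5 !linearD !linearZ /=.
have -> : crow X (mul a a) = ebasis K 1 by exact: fb 1.
have -> : crow X (mul a (mul a a)) = ebasis K 2 by exact: fb 2.
have -> : crow X (mul a (mul a (mul a a))) = ebasis K 3 by exact: fb 3.
done.
Qed.
End Scaled.
Lemma part1 (R : realType) (V : vectType R[i]) (mul : V -> V -> V) :
  \dim (fullv : {vspace V}) = 4%N ->
  leibniz_algebra mul -> cyclic_algebra mul ->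
  exists k : cls R[i], alg_iso mul (model_mul (cls_vec k)).
Proof.
move=> Hd [Hbil Hleib] [x Hg].
have [_ [_ [_ [_ [c1 [c2 [c3 Ec]]]]]]] := struct4 Hbil Hleib Hg Hd.
have S := fun t => @scaled_iso _ _ _ Hbil Hleib x t c1 c2 c3 Hg Hd.
case: (eqVneq c1 0) => [c10|c1n].
  case: (eqVneq c2 0) => [c20|c2n].
    case: (eqVneq c3 0) => [c30|c3n].
      exists (Cls1 _).
      have -> : cls_vec (Cls1 R[i]) = (1 ^+ 3 * c1) *: ebasis _ 1 + (1 ^+ 2 * c2) *: ebasis _ 2
                          + (1 * c3) *: ebasis _ 3.
        by rewrite c10 c20 c30 !mulr0 !scale0r !addr0.
      exact: S (oner_neq0 _) Ec.
    exists (Cls2 _).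
    have -> : cls_vec (Cls2 R[i]) = (c3^-1 ^+ 3 * c1) *: ebasis _ 1 + (c3^-1 ^+ 2 * c2) *: ebasis _ 2
                          + (c3^-1 * c3) *: ebasis _ 3.
      by rewrite c10 c20 !mulr0 !scale0r !add0r mulVf // scale1r.
    exact: S (invr_neq0 c3n) Ec.
  set r := 2.-root c2.
  have r2 : r ^+ 2 = c2 by rewrite /r rootCK.
  have rn : r != 0 by apply: contra_neq c2n; rewrite -r2 => ->; rewrite expr0n.
  exists (Cls3 (r^-1 * c3)).
  have -> : cls_vec (Cls3 (r^-1 * c3)) = (r^-1 ^+ 3 * c1) *: ebasis _ 1 + (r^-1 ^+ 2 * c2) *: ebasis _ 2
                          + (r^-1 * c3) *: ebasis _ 3.
    rewrite /= c10 mulr0 scale0r add0r -r2 exprVn mulVf ?scale1r //.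
    by rewrite expf_neq0.
  exact: S (invr_neq0 rn) Ec.
set r := 3.-root c1.
have r3 : r ^+ 3 = c1 by rewrite /r rootCK.
have rn : r != 0 by apply: contra_neq c1n; rewrite -r3 => ->; rewrite expr0n.
exists (Cls4 (r^-1 ^+ 2 * c2) (r^-1 * c3)).
have -> : cls_vec (Cls4 (r^-1 ^+ 2 * c2) (r^-1 * c3)) = (r^-1 ^+ 3 * c1) *: ebasis _ 1 + (r^-1 ^+ 2 * c2) *: ebasis _ 2
                          + (r^-1 * c3) *: ebasis _ 3.
  rewrite /= -r3 !exprVn mulVf ?scale1r //.
  by rewrite expf_neq0.
exact: S (invr_neq0 rn) Ec.
Qed.
Section Model.
Variable K : fieldType.
Local Notation e := (ebasis K).

Lemma eL0 c : e 0 *m model_L c = e 1.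
Proof. by rewrite /ebasis -rowE model_row /=; congr delta_mx; apply: val_inj; rewrite /= inordK. Qed.
Lemma eL1 c : e 1 *m model_L c = e 2.
Proof. by rewrite /ebasis -rowE model_row /=; congr delta_mx; apply: val_inj; rewrite /= inordK. Qed.
Lemma eL2 c : e 2 *m model_L c = e 3.
Proof. by rewrite /ebasis -rowE model_row /=; congr delta_mx; apply: val_inj; rewrite /= inordK. Qed.
Lemma eL3 c : e 3 *m model_L c = c.
Proof. by rewrite /ebasis -rowE model_row. Qed.

Lemma mm_e0 c y : model_mul c (e 0) y = y *m model_L c.
Proof. by rewrite /model_mul /ebasis mxE eqxx /= scale1r. Qed.

Lemma e_ent (i j : 'I_4) : e i 0 j = (i == j)%:R.
Proof. by rewrite /ebasis mxE eqxx /= eq_sym. Qed.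

Lemma commZ (A B : 'M[K]_4) a : GRing.comm A B -> GRing.comm A (a *: B).
Proof. by rewrite /GRing.comm -scalerAr -scalerAl => ->. Qed.

Lemma mulmxM (u : 'rV[K]_4) (A B : 'M[K]_4) : u *m (A * B) = u *m A *m B.
Proof. by rewrite -mulmxA. Qed.

Lemma e_inord (k j : nat) (Hj : (j < 4)%N) : (k < 4)%N ->
  ebasis K (inord k) 0 (Ordinal Hj) = (k == j)%:R.
Proof. by move=> hk; rewrite e_ent -val_eqE /= inordK. Qed.

End Model.
Lemma iso_suf (K : fieldType) (c c' : 'rV[K]_4) (t : K) : t != 0 ->
  c 0 0 = 0 -> c' 0 0 = 0 ->
  c 0 1 = t ^+ 3 * c' 0 1 -> c 0 2 = t ^+ 2 * c' 0 2 -> c 0 3 = t * c' 0 3 ->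
  alg_iso (model_mul c) (model_mul c').
Proof.
move=> tn c0 c'0 h1 h2 h3.
pose D := diag_mx (\row_(i < 4) t ^+ i.+1).
pose D' := diag_mx (\row_(i < 4) t^-1 ^+ i.+1).
have DD' : D *m D' = 1%:M.
  apply/matrixP => i j; rewrite mulmx_diag !mxE -exprMn mulfV // expr1n.
  by case: (i == j).
have D'D : D' *m D = 1%:M.
  apply/matrixP => i j; rewrite mulmx_diag !mxE -exprMn mulVf // expr1n.
  by case: (i == j).
have key : model_L c *m D = t *: (D *m model_L c').
  apply/matrixP => i j; rewrite mul_mx_diag mul_diag_mx !mxE.
  case: i => [[|[|[|[|m]]]] Hi] //=.
  1-3: case: j => [[|[|[|[|n]]]] Hj] //=; rewrite e_inord //= ?mul0r ?mulr0 ?mul1r ?mulr1 //; ring.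
  case: j => [[|[|[|[|n]]]] Hj] //=.
  - have -> : Ordinal Hj = 0 :> 'I_4 by apply: val_inj.
    by rewrite c0 c'0; ring.
  - have -> : Ordinal Hj = 1 :> 'I_4 by apply: val_inj.
    by rewrite h1; ring.
  - have -> : Ordinal Hj = 2 :> 'I_4 by apply: val_inj.
    by rewrite h2; ring.
  - have -> : Ordinal Hj = 3 :> 'I_4 by apply: val_inj.
    by rewrite h3; ring.
exists (mulmxr D : {linear 'rV[K]_4 -> 'rV[K]_4}); split.
  exists (mulmxr D') => x /=; by rewrite -mulmxA ?DD' ?D'D mulmx1.
move=> x y /=; rewrite /model_mul -scalemxAl -mulmxA key -scalemxAr mulmxA.
rewrite scalerA; congr (_ *: _).
by rewrite mul_mx_diag !mxE expr1.
Qed.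
Lemma omega_eq (R : realType) : omega R ^+ 2 + omega R + 1 = 0.
Proof.
have s3 : Num.sqrt (3 : R) * Num.sqrt 3 = 3 by rewrite -expr2 sqr_sqrtr // ler0n.
rewrite expr2 /omega; apply/eqP; rewrite eq_complex /=; apply/andP; split; apply/eqP.
  set s := Num.sqrt (3 : R).
  have -> : - (1 / 2) * - (1 / 2) - s / 2 * (s / 2) + - (1 / 2) + 1 = (1 - s * s / 3) * (3 / 4) :> R.
    by field.
  rewrite s3 divff; first by ring.
  by rewrite pnatr_eq0.
by field.
Qed.
Section ClsE.
Variable K : fieldType.
Lemma cls00 (k : cls K) : cls_vec k 0 0 = 0.
Proof. by case: k => [||a|a b]; rewrite /= !mxE /= ?mulr0 ?addr0. Qed.
Lemma cls01 (k : cls K) : cls_vec k 0 1 = match k with Cls4 _ _ => 1 | _ => 0 end.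
Proof. by case: k => [||a|a b]; rewrite /= !mxE /= ?mulr0 ?addr0. Qed.
Lemma cls02 (k : cls K) : cls_vec k 0 2 = match k with Cls3 _ => 1 | Cls4 a _ => a | _ => 0 end.
Proof. by case: k => [||a|a b]; rewrite /= !mxE /= ?mulr0 ?mulr1 ?addr0 ?add0r. Qed.
Lemma cls03 (k : cls K) : cls_vec k 0 3 =
  match k with Cls1 => 0 | Cls2 => 1 | Cls3 a => a | Cls4 _ b => b end.
Proof. by case: k => [||a|a b]; rewrite /= !mxE /= ?mulr0 ?mulr1 ?addr0 ?add0r. Qed.
End ClsE.
Lemma iso_nec (K : fieldType) (c c' : 'rV[K]_4) : c 0 0 = 0 ->
  alg_iso (model_mul c) (model_mul c') ->
  exists t : K, t != 0 /\ c 0 1 = t ^+ 3 * c' 0 1 /\ c 0 2 = t ^+ 2 * c' 0 2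
     /\ c 0 3 = t * c' 0 3.
Proof.
move=> c00 [f [[g fK gK] Hf]].
set M := model_L c'.
set t := f (ebasis K 0) 0 0.
have rec y : f (y *m model_L c) = t *: (f y *m M).
  by rewrite -mm_e0 Hf.
have u1 : f (ebasis K 1) = t *: (f (ebasis K 0) *m M) by rewrite -(eL0 c) rec.
have u2 : f (ebasis K 2) = t *: (f (ebasis K 1) *m M) by rewrite -(eL1 c) rec.
have u3 : f (ebasis K 3) = t *: (f (ebasis K 2) *m M) by rewrite -(eL2 c) rec.
have u4 : f c = t *: (f (ebasis K 3) *m M) by rewrite -{1}(eL3 c) rec.
have cdec : c = c 0 1 *: ebasis K 1 + c 0 2 *: ebasis K 2 + c 0 3 *: ebasis K 3.
  apply/rowP => j; rewrite !mxE /=.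
  case: j => [[|[|[|[|m]]]] Hj] //=.
  - by rewrite !mulr0 !addr0; rewrite -c00; congr (c 0 _); apply: val_inj.
  - by rewrite mulr1 !mulr0 !addr0; congr (c 0 _); apply: val_inj.
  - by rewrite mulr1 !mulr0 addr0 add0r; congr (c 0 _); apply: val_inj.
  - by rewrite mulr1 !mulr0 !add0r; congr (c 0 _); apply: val_inj.
have g0 : g 0 = 0 by rewrite -{1}(linear0 f) fK.
have tn : t != 0.
  apply/eqP => t0; move: u1; rewrite t0 scale0r => /(congr1 g); rewrite fK g0.
  move/(congr1 (fun m : 'rV[K]_4 => m 0 1)); rewrite e_ent mxE eqxx => /eqP.
  by rewrite oner_eq0.
set u0 := f (ebasis K 0).
have v1 : f (ebasis K 1) = t *: (u0 *m M) by [].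
have v2 : f (ebasis K 2) = t ^+ 2 *: (u0 *m M ^+ 2).
  by rewrite u2 v1 -scalemxAl scalerA -expr2 expr2 mulmxM.
have v3 : f (ebasis K 3) = t ^+ 3 *: (u0 *m M ^+ 3).
  by rewrite u3 v2 -scalemxAl scalerA -exprS (exprSr M 2) -mulmxA.
have v4 : f c = t ^+ 4 *: (u0 *m M ^+ 4).
  by rewrite u4 v3 -scalemxAl scalerA -exprS (exprSr M 3) -mulmxA.
pose P := t ^+ 4 *: M ^+ 4 - (c 0 3 * t ^+ 3) *: M ^+ 3 - (c 0 2 * t ^+ 2) *: M ^+ 2
   - (c 0 1 * t) *: M.
have cP : GRing.comm P M.
  apply: commr_sym; apply: commrB; [apply: commrB; [apply: commrB|]|];
    apply: commZ; first [exact: commr_refl | apply: commrX; exact: commr_refl].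
have P0 : u0 *m P = 0.
  rewrite /P !mulmxBr -!scalemxAr -(scalerA (c 0 3)) -(scalerA (c 0 2)) -(scalerA (c 0 1)) -v4 -v3 -v2 -v1.
  by rewrite {1}cdec !linearD !linearZ /= !scalerN !addrK subrr.
have Pk (k : nat) : u0 *m M ^+ k *m P = 0.
  have E := commrX k cP; rewrite /GRing.comm in E.
  rewrite -mulmxA; change (M ^+ k *m P) with (M ^+ k * P).
  by rewrite -E mulmxM P0 mul0mx.
have uP (k : 'I_4) : f (ebasis K k) *m P = 0.
  case: k => [[|[|[|[|m]]]] Hk] //.
  - have -> : Ordinal Hk = 1 :> 'I_4 by apply: val_inj.
    by rewrite v1 -(expr1 M) -scalemxAl Pk scaler0.
  - have -> : Ordinal Hk = 2 :> 'I_4 by apply: val_inj.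
    by rewrite v2 -scalemxAl Pk scaler0.
  - have -> : Ordinal Hk = 3 :> 'I_4 by apply: val_inj.
    by rewrite v3 -scalemxAl Pk scaler0.
have yP (y : 'rV[K]_4) : y *m P = 0.
  rewrite -(gK y) (row_sum_delta (g y)) linear_sum mulmx_suml big1 // => k _.
  by rewrite linearZ -scalemxAl uP scaler0.
have w1 : ebasis K 0 *m M = ebasis K 1 := eL0 c'.
have w2 : ebasis K 0 *m M ^+ 2 = ebasis K 2 by rewrite expr2 mulmxM w1 eL1.
have w3 : ebasis K 0 *m M ^+ 3 = ebasis K 3 by rewrite (exprSr M 2) mulmxM w2 eL2.
have w4 : ebasis K 0 *m M ^+ 4 = c' by rewrite (exprSr M 3) mulmxM w3 eL3.
have := yP (ebasis K 0).
rewrite /P !mulmxBr -!scalemxAr w1 w2 w3 w4 => H.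
have Ej (j : 'I_4) := congr1 (fun m : 'rV[K]_4 => m 0 j) H.
have E1 := Ej 1; have E2 := Ej 2; have E3 := Ej 3.
rewrite !mxE /= in E1 E2 E3.
rewrite !mulr0 !mulr1 !subr0 in E1 E2 E3.
exists t; split => //.
move/eqP: E1; rewrite subr_eq0 => /eqP E1.
move/eqP: E2; rewrite subr_eq0 => /eqP E2.
move/eqP: E3; rewrite subr_eq0 => /eqP E3.
split; first by apply: (mulIf tn); rewrite -E1; ring.
split; first by apply: (mulIf (expf_neq0 2 tn)); rewrite -E2; ring.
by apply: (mulIf (expf_neq0 3 tn)); rewrite -E3; ring.
Qed.
Lemma part2 (R : realType) (k k' : cls R[i]) :
  alg_iso (model_mul (cls_vec k)) (model_mul (cls_vec k')) <-> cls_equiv k k'.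
Proof.
set w := omega R.
have w0 : w ^+ 2 + w + 1 = 0 := omega_eq R.
have w3 : w ^+ 3 = 1.
  have -> : w ^+ 3 = 1 + (w - 1) * (w ^+ 2 + w + 1) by ring.
  by rewrite w0 mulr0 addr0.
have wn : w != 0 by apply/eqP => w00; move: w3; rewrite w00 expr0n /= => /eqP; rewrite eq_sym oner_eq0.
have f3a : w * w ^+ 2 = 1 by rewrite -w3; ring.
have f3b : w ^+ 2 * w = 1 by rewrite -w3; ring.
have f6 : w ^+ 2 * (w ^+ 2) ^+ 2 = 1.
  have -> : w ^+ 2 * (w ^+ 2) ^+ 2 = (w ^+ 3) ^+ 2 by ring.
  by rewrite w3 expr1n.
have cube (t : R[i]) : t ^+ 3 = 1 -> t = 1 \/ t = w \/ t = w ^+ 2.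
  move=> t3.
  have : (t - 1) * (t - w) * (t - w ^+ 2) == 0.
    have -> : (t - 1) * (t - w) * (t - w ^+ 2) = t ^+ 3 - 1 - (t - 1) * (t + 1 - w) * (w ^+ 2 + w + 1).
      by ring.
    by rewrite t3 subrr w0 mulr0 subrr.
  rewrite !mulf_eq0 !subr_eq0 => /orP [/orP [] /eqP ->|/eqP ->]; tauto.
have sq (t : R[i]) : t ^+ 2 = 1 -> t = 1 \/ t = -1.
  move=> t2; have : (t - 1) * (t + 1) == 0.
    have -> : (t - 1) * (t + 1) = t ^+ 2 - 1 by ring.
    by rewrite t2 subrr.
  rewrite mulf_eq0 subr_eq0 addr_eq0 => /orP [] /eqP ->; tauto.
split.
  move=> /(iso_nec (cls00 k)) [t [tn [h1 [h2 h3]]]].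
  move: h1 h2 h3; rewrite !cls01 !cls02 !cls03.
  have z1 (n : nat) : 0 = t ^+ n * 1 -> False.
    by rewrite mulr1 => /esym /eqP; rewrite expf_eq0 (negPf tn) andbF.
  have o1 (n : nat) : 1 = t ^+ n * 0 -> False.
    by rewrite mulr0 => /eqP; rewrite oner_eq0.
  case: k => [||a|a b]; case: k' => [||a'|a' b'] /= h1 h2 h3 //;
    try solve [exfalso; first [exact: (z1 1 h3) | exact: (z1 2 h2) | exact: (z1 3 h1)
                             | exact: (o1 1 h3) | exact: (o1 2 h2) | exact: (o1 3 h1)]].
  - move: h2; rewrite mulr1 => /esym /sq [] t1; move: h3; rewrite t1.
      by rewrite mul1r => ->; left.
    by rewrite mulN1r => ->; right; rewrite opprK.
  - move: h1; rewrite mulr1 => /esym /cube [|[]] t1; move: h2 h3; rewrite t1.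
    + by rewrite expr1n !mul1r => -> ->; left.
    + move=> -> ->; right; right; rewrite -/w; congr pair.
        by rewrite mulrA f3a mul1r.
      by rewrite mulrA f3b mul1r.
    + move=> -> ->; right; left; rewrite -/w; congr pair.
        by rewrite mulrA f6 mul1r.
      by rewrite mulrA f3a mul1r.
case: k => [||a|a b]; case: k' => [||a'|a' b'] H; simpl in H; try done.
- apply: (iso_suf (t := 1)); rewrite ?cls00 ?cls01 ?cls02 ?cls03 ?oner_neq0 //=; ring.
- apply: (iso_suf (t := 1)); rewrite ?cls00 ?cls01 ?cls02 ?cls03 ?oner_neq0 //=; ring.
- case: H => ->.
    apply: (iso_suf (t := 1)); rewrite ?cls00 ?cls01 ?cls02 ?cls03 ?oner_neq0 //=; ring.
  apply: (iso_suf (t := -1)); rewrite ?cls00 ?cls01 ?cls02 ?cls03 ?oppr_eq0 ?oner_neq0 //=; ring.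
- case: H => [[-> ->]|[[-> ->]|[-> ->]]].
  + apply: (iso_suf (t := 1)); rewrite ?cls00 ?cls01 ?cls02 ?cls03 ?oner_neq0 //=; ring.
  + apply: (iso_suf (t := w ^+ 2)); rewrite ?cls00 ?cls01 ?cls02 ?cls03 ?expf_neq0 //=.
    * by rewrite -/w mulr1 -f6; ring.
    * by rewrite -/w mulrA [_ * w ^+ 2]mulrC f6 mul1r.
    * by rewrite -/w mulrA f3b mul1r.
  + apply: (iso_suf (t := w)); rewrite ?cls00 ?cls01 ?cls02 ?cls03 //=.
    * by rewrite -/w w3 mulr1.
    * by rewrite -/w mulrA f3b mul1r.
    * by rewrite -/w mulrA f3a mul1r.
Qed.

Theorem corollary4p2 (R : realType) :
  (forall (V : vectType R[i]) (mul : V -> V -> V),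
     \dim (fullv : {vspace V}) = 4%N ->
     leibniz_algebra mul -> cyclic_algebra mul ->
     exists k : cls R[i], alg_iso mul (model_mul (cls_vec k))) /\
  (forall k k' : cls R[i],
     alg_iso (model_mul (cls_vec k)) (model_mul (cls_vec k')) <->
     cls_equiv k k').
Proof.
split; first exact: part1.
exact: part2.
Qed.
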